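(* Let $N=\{1,\ldots,n\}$ and $\mathcal{X}=\{-1,1\}^n$. A random voting rule $\bar\phi:\mathcal{X}\to[-1,1]$ is robust if and only if there exists $w\in\mathbb{R}_+^n$ such that for every $x\in\mathcal{X}$, $\bar\phi(x)$ and $\sum_{i\in N}w_ix_i$ are both nonzero and have the same sign, i.e. $\bar\phi(x)\sum_{i\in N}w_ix_i>0$ for all $x\in\mathcal{X}$.
   Context: A random voting rule $\bar\phi$ chooses outcome $1$ with probability $(1+\bar\phi(x))/2$ and $-1$ with probability $(1-\bar\phi(x))/2$ at profile $x$. Under $p\in\Delta(\mathcal{X})$ (probability distributions on $\mathcal{X}$), the responsiveness of individual $i$ is $(E_p[\bar\phi(x)x_i]+1)/2$. $\bar\phi$ is robust if for every $p\in\Delta(\mathcal{X})$ there is some $i\in N$ with $E_p[\bar\phi(x)x_i]>0$ (responsiveness strictly greater than $1/2$). *)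

(* Defs.v *)
From mathcomp Require Import all_boot all_order all_algebra.
Set Implicit Arguments. Unset Strict Implicit. Unset Printing Implicit Defensive.
Import Order.TTheory GRing.Theory Num.Theory.
Local Open Scope ring_scope.

(* Voters N = {1,...,n} are modelled by 'I_n. A profile x in X = {-1,1}^n is
   encoded as a finite function 'I_n -> bool, with coordinate x_i = sgn (x i)
   where sgn true = 1 and sgn false = -1. *)
Definition profile (n : nat) := {ffun 'I_n -> bool}.

Definition sgnb (R : ringType) (b : bool) : R := if b then 1 else -1.

Definition xcoord (R : ringType) n (x : profile n) (i : 'I_n) : R := sgnb R (x i).

Definition random_voting_rule (R : realFieldType) n (phi : profile n -> R) : Prop :=
  forall x, -1 <= phi x <= 1.

Definition is_distribution (R : realFieldType) n (p : profile n -> R) : Prop :=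
  (forall x, 0 <= p x) /\ \sum_(x : profile n) p x = 1.

Definition expect_phi_x (R : realFieldType) n (p phi : profile n -> R) (i : 'I_n) : R :=
  \sum_(x : profile n) p x * (phi x * xcoord R x i).

Definition responsiveness (R : realFieldType) n (p phi : profile n -> R) (i : 'I_n) : R :=
  (expect_phi_x p phi i + 1) / 2.

Definition robust (R : realFieldType) n (phi : profile n -> R) : Prop :=
  forall p : profile n -> R, is_distribution p ->
    exists i : 'I_n, 0 < expect_phi_x p phi i.

(* Main.v *)
Require Import Defs.
From mathcomp Require Import all_boot all_order all_algebra.
From mathcomp Require Import ring lra.
Import Order.TTheory GRing.Theory Num.Theory.
Local Open Scope ring_scope.
Set Implicit Arguments. Unset Strict Implicit. Unset Printing Implicit Defensive.

Section FM.
Variable R : realFieldType.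

Lemma sep (I : finType) (P N : pred I) (f : I -> R) :
  (forall p q, P p -> N q -> f p < f q) ->
  exists t, (forall p, P p -> f p < t) /\ (forall q, N q -> t < f q).
Proof.
move=> H.
case: (pickP P) => [p0 Pp0|P0]; case: (pickP N) => [q0 Nq0|N0].
- case: (@arg_maxP _ R I p0 P f Pp0) => pm Ppm Hp.
  case: (@arg_minP _ R I q0 N f Nq0) => qm Nqm Hq.
  exists ((f pm + f qm) / 2); have := H _ _ Ppm Nqm => hpq; split.
  + move=> p Pp; have h : f p <= f pm := Hp _ Pp; lra.
  + move=> q Nq; have h : f qm <= f q := Hq _ Nq; lra.
- case: (@arg_maxP _ R I p0 P f Pp0) => pm Ppm Hp.
  exists (f pm + 1); split; last by move=> q; rewrite N0.
  move=> p Pp; have h : f p <= f pm := Hp _ Pp; lra.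
- case: (@arg_minP _ R I q0 N f Nq0) => qm Nqm Hq.
  exists (f qm - 1); split; first by move=> p; rewrite P0.
  move=> q Nq; have h : f qm <= f q := Hq _ Nq; lra.
- by exists 0; split => k; rewrite ?P0 ?N0.
Qed.

Definition dot d (a w : nat -> R) := \sum_(i < d) a i * w i.

Definition cert d (I : finType) (S : pred I) (a : I -> nat -> R) (c : I -> R) :=
  [/\ (forall k, S k -> 0 <= c k), (exists k, S k /\ 0 < c k) &
      (forall i, (i < d)%N -> \sum_(k | S k) c k * a k i = 0)].

Definition feas d (I : finType) (S : pred I) (a : I -> nat -> R) :=
  exists w, forall k, S k -> 0 < dot d (a k) w.

Lemma sum_ge_term (I : finType) (F : I -> R) k :
  (forall j, 0 <= F j) -> F k <= \sum_j F j.
Proof.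
move=> H; rewrite (bigD1 k) //= lerDl; apply: sumr_ge0 => j _; exact: H.
Qed.

Lemma FM0 (I : finType) (S : pred I) (a : I -> nat -> R) :
  (forall c, ~ cert 0 S a c) -> feas 0 S a.
Proof.
move=> H; exists (fun _ => 0) => k Sk; exfalso.
apply: (H (fun j => if j == k then 1 else 0)); split.
- by move=> j _; case: (j == k).
- by exists k; rewrite eqxx ltr01.
- by [].
Qed.


Lemma FMS d :
  (forall (I : finType) (S : pred I) (a : I -> nat -> R),
      (forall c, ~ cert d S a c) -> feas d S a) ->
  forall (I : finType) (S : pred I) (a : I -> nat -> R),
      (forall c, ~ cert d.+1 S a c) -> feas d.+1 S a.
Proof.
move=> IH I S a H.
pose I' := (I + I * I)%type.
pose S' : pred I' := fun k' => match k' with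
  | inl k => S k && (a k d == 0)
  | inr pq => [&& S pq.1, S pq.2, 0 < a pq.1 d & a pq.2 d < 0] end.
pose a' : I' -> nat -> R := fun k' => match k' with
  | inl k => a k
  | inr pq => fun i => - a pq.2 d * a pq.1 i + a pq.1 d * a pq.2 i end.
have [w' Hw'] : feas d S' a'.
  apply: IH => c' [c'0 [k' [Sk' ck']] c'eq].
  pose c k := (if S' (inl k) then c' (inl k) else 0)
    + \sum_q (if S' (inr (k, q)) then c' (inr (k, q)) * (- a q d) else 0)
    + \sum_p (if S' (inr (p, k)) then c' (inr (p, k)) * a p d else 0).
  have cS k : ~~ S k -> c k = 0.
    move=> nSk; rewrite /c /S' /= (negbTE nSk) /= add0r big1 ?add0r.
      by apply: big1 => p _; rewrite andbF.
    by move=> q _.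
  have t1 k : 0 <= (if S' (inl k) then c' (inl k) else 0).
    by case: ifP => // Sk; apply: c'0.
  have t2 k q : 0 <= (if S' (inr (k, q)) then c' (inr (k, q)) * (- a q d) else 0).
    case: ifP => // Skq; apply: mulr_ge0; first exact: c'0.
    by move: Skq => /and4P [_ _ _ h]; rewrite oppr_ge0 ltW.
  have t3 p k : 0 <= (if S' (inr (p, k)) then c' (inr (p, k)) * a p d else 0).
    case: ifP => // Skq; apply: mulr_ge0; first exact: c'0.
    by move: Skq => /and4P [_ _ h _]; rewrite ltW.
  have c0 k : 0 <= c k.
    by rewrite /c; apply: addr_ge0; [apply: addr_ge0|]; rewrite ?t1 //;
      apply: sumr_ge0 => j _; rewrite ?t2 ?t3.
  have key i : \sum_(k | S k) c k * a k i = \sum_(k' | S' k') c' k' * a' k' i.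
    rewrite big_mkcond /= (eq_bigr (fun k => c k * a k i)); last first.
      by move=> k _; case: ifP => // /negbT /cS ->; rewrite mul0r.
    rewrite [RHS]big_mkcond big_sumType /=.
    rewrite /c; under eq_bigr => k _ do rewrite !mulrDl !mulr_suml.
    rewrite !big_split /= -addrA; congr (_ + _).
      by apply: eq_bigr => k _; case: ifP; rewrite ?mul0r.
    rewrite [X in _ + X]exchange_big /= -big_split /=.
    under eq_bigr => p _ do rewrite -big_split /=.
    rewrite pair_bigA /=.
    apply: eq_bigr => [[p q]] _ /=; case: ifP => _; last by rewrite !mul0r addr0.
    ring.
  apply: (H c); split.
  - by move=> k _; apply: c0.
  - case: k' Sk' ck' => [k|[p q]] /= Sk ck.
    + exists k; split; first by case/andP: Sk.
      apply: (lt_le_trans ck); rewrite /c /= Sk -addrA lerDl.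
      by apply: addr_ge0; apply: sumr_ge0 => j _; rewrite ?t2 ?t3.
    + exists p; split; first by case/and4P: Sk.
      have hq : 0 < - a q d by rewrite oppr_gt0; case/and4P: Sk.
      apply: (lt_le_trans (mulr_gt0 ck hq)); rewrite /c.
      have hB := @sum_ge_term _ (fun q0 => if S' (inr (p, q0)) then c' (inr (p, q0)) * (- a q0 d) else 0) q (t2 p).
      rewrite /= Sk in hB.
      have hA := t1 p.
      have hC : 0 <= \sum_p0 (if S' (inr (p0, p)) then c' (inr (p0, p)) * a p0 d else 0).
        by apply: sumr_ge0 => j _; rewrite t3.
      lra.
  - move=> i; rewrite ltnS leq_eqVlt => /orP [/eqP -> | lt]; rewrite key.
      apply: big1 => [[k|[p q]]] /=; first by case/andP => _ /eqP ->; rewrite mulr0.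
      by move=> _; rewrite [X in _ * X](_ : _ = 0) ?mulr0 //; ring.
    exact: c'eq.
pose dk k := dot d (a k) w'.
have hZ k : S k -> a k d = 0 -> 0 < dk k.
  by move=> Sk hk; apply: (Hw' (inl k)); rewrite /= Sk hk eqxx.
have hPN p q : S p -> S q -> 0 < a p d -> a q d < 0 ->
    0 < - a q d * dk p + a p d * dk q.
  move=> Sp Sq hp hq; have := Hw' (inr (p, q)); rewrite /= Sp Sq hp hq => /(_ isT).
  rewrite /dk /dot !mulr_sumr -big_split /=.
  by under eq_bigr => i _ do rewrite mulrDl -!mulrA.
pose f k := - dk k / a k d.
have Hsep : forall p q, (fun k => S k && (0 < a k d)) p -> (fun k => S k && (a k d < 0)) q -> f p < f q.
  move=> p q /andP [Sp hp] /andP [Sq hq]; have := hPN p q Sp Sq hp hq => h.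
  have hp0 : a p d != 0 by rewrite gt_eqF.
  have hq0 : a q d != 0 by rewrite lt_eqF.
  rewrite -subr_gt0 (_ : f q - f p = (- a q d * dk p + a p d * dk q) / (a p d * - a q d)).
    by apply: divr_gt0 => //; apply: mulr_gt0 => //; rewrite oppr_gt0.
  by rewrite /f; field; rewrite hp0 hq0.
have [t [tP tN]] := sep Hsep.
exists (fun i => if i == d then t else w' i) => k Sk.
rewrite /dot big_ord_recr /= eqxx.
have -> : \sum_(i < d) a k i * (if (i : nat) == d then t else w' i) = dk k.
  by apply: eq_bigr => i _; rewrite (ltn_eqF (ltn_ord i)).
case: (ltrgtP (a k d) 0) => hk.
- have hk0 : a k d != 0 by rewrite lt_eqF.
  rewrite (_ : _ + _ = (- a k d) * (f k - t)); last by rewrite /f; field.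
  by apply: mulr_gt0; rewrite ?oppr_gt0 ?subr_gt0 //; apply: tN; rewrite Sk hk.
- have hk0 : a k d != 0 by rewrite gt_eqF.
  rewrite (_ : _ + _ = a k d * (t - f k)); last by rewrite /f; field.
  by apply: mulr_gt0; rewrite ?subr_gt0 //; apply: tP; rewrite Sk hk.
- by rewrite hk mul0r addr0; apply: hZ.
Qed.


Lemma FMall d : forall (I : finType) (S : pred I) (a : I -> nat -> R),
  (forall c, ~ cert d S a c) -> feas d S a.
Proof. by elim: d => [|d IH]; [exact: FM0 | exact: FMS]. Qed.

End FM.

Theorem propositionA (R : realFieldType) (n : nat) (phi : profile n -> R) :
  random_voting_rule phi ->
  (robust phi <->
   exists w : 'I_n -> R, (forall i, 0 <= w i) /\
     forall x : profile n, 0 < phi x * \sum_(i < n) w i * xcoord R x i).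
Proof.
move=> _; split.
- move=> Hr.
  pose I := (profile n + 'I_n)%type.
  pose a : I -> nat -> R := fun k i => match k with
    | inl x => if insub i is Some j then phi x * xcoord R x j else 0
    | inr j => if i == val j then 1 else 0 end.
  have ha x (j : 'I_n) : a (inl x) j = phi x * xcoord R x j by rewrite /a valK.
  have hb (j j' : 'I_n) : a (inr j') j = if j == j' then 1 else 0 by [].
  have [w Hw] : feas n (predT : pred I) a.
    apply: FMall.
    move=> c [c0 [k [_ ck]] ceq].
    have key j : \sum_x c (inl x) * (phi x * xcoord R x j) + c (inr j) = 0.
      have := ceq j (ltn_ord j); rewrite big_sumType /=.
      rewrite (eq_bigr (fun x => c (inl x) * (phi x * xcoord R x j))); last first.
        by move=> x _; rewrite valK.
      rewrite (bigD1 j) //= eqxx mulr1 [X in c (inr j) + X]big1 ?addr0 //.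
      move=> j' hj; case: eqP => [/val_inj E|]; last by rewrite mulr0.
      by rewrite E eqxx in hj.
    pose s := \sum_x c (inl x).
    have s0 : 0 <= s by apply: sumr_ge0 => x _; apply: c0.
    case: (eqVneq s 0) => hs.
      have cx x : c (inl x) = 0.
        apply: (@psumr_eq0P _ _ predT (fun y => c (inl y))) => //.
        by move=> y _; apply: c0.
      have cj j : c (inr j) = 0.
        by have := key j; rewrite big1 ?add0r // => x _; rewrite cx mul0r.
      by case: k ck => [x|j]; rewrite ?cx ?cj ltxx.
    have sp : 0 < s by rewrite lt_def hs s0.
    pose p x := c (inl x) / s.
    have [|i] := Hr p.
      split; first by move=> x; apply: divr_ge0 => //; apply: c0.
      by rewrite /p -mulr_suml divff.
    rewrite /expect_phi_x /p.
    under eq_bigr do rewrite mulrAC.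
    rewrite -mulr_suml (_ : \sum_x _ = - c (inr i)); last first.
      by apply/eqP; rewrite -addr_eq0 key.
    rewrite pmulr_lgt0 ?invr_gt0 // oppr_gt0 => h.
    by have := c0 (inr i) isT; rewrite leNgt h.
  exists (fun j : 'I_n => w j); split.
  + move=> j; apply: ltW; have := Hw (inr j) isT.
    rewrite /dot (bigD1 j) //= eqxx mul1r big1 ?addr0 //.
    move=> i hij; case: eqP => [/val_inj eij|]; last by rewrite mul0r.
    by rewrite eij eqxx in hij.
  + move=> x; have := Hw (inl x) isT; rewrite /dot mulr_sumr.
    rewrite (eq_bigr (fun i : 'I_n => phi x * (w i * xcoord R x i))) //.
    by move=> i _; rewrite ha; ring.
- move=> [w [w0 Hw]] p [p0 p1].
  case: (pickP (fun i => 0 < expect_phi_x p phi i)) => [i hi|hN]; first by exists i.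
  exfalso.
  have hle : \sum_i w i * expect_phi_x p phi i <= 0.
    apply: sumr_le0 => i _; apply: mulr_ge0_le0 => //.
    by have := hN i; rewrite /= ltNge => /negbFE.
  have heq : \sum_i w i * expect_phi_x p phi i
           = \sum_x p x * (phi x * \sum_(i < n) w i * xcoord R x i).
    rewrite /expect_phi_x.
    under eq_bigr do rewrite mulr_sumr.
    rewrite exchange_big /=; apply: eq_bigr => x _.
    rewrite !mulr_sumr; apply: eq_bigr => i _; ring.
  have [x0 hx0] : exists x, 0 < p x.
    case: (pickP (fun x => 0 < p x)) => [x hx|hx]; first by exists x.
    have : \sum_x p x = 0.
      apply: big1 => x _; apply/eqP; rewrite eq_le p0 andbT.
      by have := hx x; rewrite /= ltNge => /negbFE.
    by rewrite p1 => /eqP; rewrite oner_eq0.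
  have : 0 < \sum_x p x * (phi x * \sum_(i < n) w i * xcoord R x i).
    apply: (lt_le_trans (mulr_gt0 hx0 (Hw x0))).
    apply: (@sum_ge_term R _ (fun x => p x * (phi x * \sum_(i < n) w i * xcoord R x i))).
    by move=> x; apply: mulr_ge0 => //; apply: ltW.
  by rewrite -heq ltNge hle.
Qed.
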